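(* Let $\ell\geq 1$ be an integer. For integers $0\leq k\leq s\leq \ell$ there are constants $\sigma_{\ell,s,k}$ (depending only on $\ell,s,k$) such that the following holds: for every $\xi\in\mathbb{R}$, $h\in\mathbb{R}\setminus\{0\}$ and $\mathbf{a}=(a_0,\ldots,a_\ell)\in\mathbb{R}^{\ell+1}$, if $q_{\mathbf{a}}$ denotes the unique polynomial of degree at most $\ell$ with $q_{\mathbf{a}}(\xi+ih)=a_i$ for $i=0,\ldots,\ell$, then \[ q_{\mathbf{a}}^{(\ell-s)}(\xi)=h^{s-\ell}\sum_{k=0}^{s}\sigma_{\ell,s,k}\Bigg(\sum_{j=0}^{\ell}(-1)^j\binom{\ell}{j}j^k a_j\Bigg), \] where $q_{\mathbf{a}}^{(\ell-s)}$ denotes the $(\ell-s)$-th derivative.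
   Context: The convention $0^0=1$ is used. *)

(* Defs.v *)
From mathcomp Require Export all_boot all_order all_algebra.
From mathcomp Require Export reals.

(* Main.v *)
Require Import Defs.
From mathcomp Require Import all_boot all_order all_algebra reals.
From mathcomp Require Import ring lra zify.
Import Order.TTheory GRing.Theory Num.Theory.
Local Open Scope ring_scope.

Section T.
Variable R : realType.

Definition T (l n : nat) : R :=
  \sum_(j < l.+1) (-1) ^+ j * ('C(l, j))%:R * (j%:R) ^+ n.

Lemma T_wide l N n : (l < N)%N ->
  \sum_(j < N) (-1) ^+ j * ('C(l, j))%:R * (j%:R : R) ^+ n = T l n.
Proof.
move=> lN; rewrite /T (big_ord_widen _ (fun j => (-1) ^+ j * ('C(l, j))%:R * (j%:R : R) ^+ n) lN).
rewrite [LHS](bigID (fun j : 'I_N => (j < l.+1)%N)) /= [X in _ + X]big1 ?addr0 //.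
by move=> j; rewrite -leqNgt => hj; rewrite bin_small // mulr0 mul0r.
Qed.

Lemma T_rec l n : T l.+1 n = - \sum_(r < n) ('C(n, r))%:R * T l r.
Proof.
rewrite {1}/T big_ord_recl /=.
under eq_bigr => i _ do rewrite binS natrD mulrDr mulrDl /bump /= add1n.
rewrite big_split /=.
have -> : \sum_(i < l.+1) (-1) ^+ i.+1 * ('C(l, i.+1))%:R * (i.+1)%:R ^+ n
   = T l n - (-1) ^+ 0 * ('C(l, 0))%:R * (0%:R : R) ^+ n.
  by rewrite -(@T_wide l l.+2 n (leqW (ltnSn l))) [X in _ = X - _]big_ord_recl /= addrAC subrr add0r.
have -> : \sum_(i < l.+1) (-1) ^+ i.+1 * ('C(l, i))%:R * (i.+1)%:R ^+ n
   = - \sum_(r < n.+1) ('C(n, r))%:R * T l r.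
  rewrite /T.
  under eq_bigr => i _ do rewrite exprS mulN1r !mulNr -natr1 exprD1n big_distrr /=.
  rewrite sumrN; congr (- _); rewrite exchange_big /=; apply: eq_bigr => r _.
  rewrite big_distrr /=; apply: eq_bigr => i _.
  rewrite -[_ *+ 'C(n,r)]mulr_natl; ring.
rewrite (big_ord_recr n) /= !bin0 binn mul1r. ring.
Qed.
End T.
Section T2.
Variable R : realType.
Lemma T_van l : (forall n, (n < l)%N -> T R l n = 0) /\ T R l l = (-1) ^+ l * (l`!)%:R.
Proof.
elim: l => [|l [IH1 IH2]].
  split => //; by rewrite /T big_ord1 /= !expr0 bin0 !mul1r.
have H1 : forall n, (n < l.+1)%N -> T R l.+1 n = 0.
  move=> n hn; rewrite T_rec big1 ?oppr0 // => r _.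
  by rewrite IH1 ?mulr0 // (leq_trans (ltn_ord r)).
split => //.
rewrite T_rec big_ord_recr /= big1 ?add0r; last first.
  by move=> r _; rewrite IH1 ?mulr0.
rewrite IH2 binSn factS natrM exprS; ring.
Qed.
End T2.
Section M.
Variable R : realType.
Definition M (l k : nat) (p : {poly R}) : R :=
  \sum_(j < l.+1) (-1) ^+ j * ('C(l, j))%:R * (j%:R) ^+ k * p.[j%:R].

Lemma M_coef l k (p : {poly R}) : (size p <= l.+1)%N ->
  M l k p = \sum_(i < l.+1) p`_i * T R l (k + i).
Proof.
move=> hs; rewrite /M.
under eq_bigr => j _ do rewrite (horner_coef_wide _ hs) mulr_sumr.
rewrite exchange_big /=; apply: eq_bigr => i _.
rewrite /T mulr_sumr; apply: eq_bigr => j _.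
rewrite exprD; ring.
Qed.

Lemma sum_delta n j (F : nat -> R) : (j < n)%N ->
  \sum_(k < n) ((k:nat) == j)%:R * F k = F j.
Proof.
move=> hj; rewrite (bigD1 (Ordinal hj)) //= eqxx mul1r big1 ?addr0 // => k hk.
have -> : ((k:nat) == j) = false by apply/negbTE; exact hk.
by rewrite mul0r.
Qed.
End M.
Arguments M {R}.
Section Tri.
Variable R : realType.
Variable l : nat.

Lemma Tll_neq0 : T R l l != 0.
Proof.
by rewrite (proj2 (T_van R l)) mulf_neq0 ?signr_eq0 // pnatr_eq0 -lt0n fact_gt0.
Qed.

Lemma tri S : (S <= l)%N -> exists beta : nat -> nat -> R, forall s, (s <= S)%N ->
  (forall k, (s < k)%N -> beta s k = 0) /\
  forall p : {poly R}, (size p <= l.+1)%N ->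
    p`_(l - s) = \sum_(k < l.+1) beta s k * M l k p.
Proof.
elim: S => [_|S IH hS].
  exists (fun s k => if k == 0%N then (T R l l)^-1 else 0) => s; rewrite leqn0 => /eqP -> {s}.
  split; first by case.
  move=> p hp; rewrite big_ord_recl /= big1 ?addr0; last by move=> i _; rewrite mul0r.
  rewrite M_coef // big_ord_recr /= big1 ?add0r; last first.
    by move=> i _; rewrite (proj1 (T_van R l)) ?mulr0 // add0n.
  by rewrite subn0 add0n mulrCA mulVf ?Tll_neq0 ?mulr1.
have [beta Hb] := IH (ltnW hS).
set i0 := (l - S.+1)%N.
pose gamma k := (((k == S.+1)%:R : R) - \sum_(i < l.+1)
   (if (i0 < i)%N then T R l (S.+1 + i) * beta (l - i)%N k else 0)) / T R l l.
exists (fun s k => if s == S.+1 then gamma k else beta s k) => s.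
rewrite leq_eqVlt ltnS => /orP [/eqP ->|hs]; last first.
  have -> : (s == S.+1) = false by apply/negbTE; rewrite neq_ltn ltnS hs.
  exact: Hb.
rewrite eqxx; split.
  move=> k hk; rewrite /gamma.
  have -> : (k == S.+1) = false by apply/negbTE; rewrite neq_ltn hk orbT.
  rewrite big1 ?subrr ?mul0r // => i _.
  case: ifP => // hi; rewrite (proj1 (Hb (l - i)%N _)) ?mulr0 //.
    rewrite /i0 in hi; lia.
  rewrite /i0 in hi; lia.
move=> p hp.
have HM : M l S.+1 p = p`_i0 * T R l l + \sum_(i < l.+1)
    (if (i0 < i)%N then p`_i * T R l (S.+1 + i) else 0).
  rewrite M_coef // -(@sum_delta R l.+1 i0 (fun i => p`_i * T R l l)); last by rewrite /i0; lia.
  rewrite -big_split /=; apply: eq_bigr => i _.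
  case: (ltngtP i i0) => hi.
  - rewrite (proj1 (T_van R l)); last by rewrite /i0 in hi; lia.
    by rewrite mulr0 mul0r addr0.
  - by rewrite mul0r add0r.
  - rewrite mul1r addr0 hi; congr (_ * T R l _); rewrite /i0; lia.
have HS : \sum_(i < l.+1)
    (if (i0 < i)%N then p`_i * T R l (S.+1 + i) else 0) =
    \sum_(k < l.+1) (\sum_(i < l.+1)
   (if (i0 < i)%N then T R l (S.+1 + i) * beta (l - i)%N k else 0)) * M l k p.
  under [RHS]eq_bigr => k _ do rewrite mulr_suml.
  rewrite exchange_big /=; apply: eq_bigr => i _.
  case: ifP => hi; last by rewrite big1 // => k _; rewrite mul0r.
  have -> : p`_i = p`_(l - (l - i)) by congr (p`_ _); have := ltn_ord i; lia.
  rewrite (proj2 (Hb (l - i)%N _)) //; last by rewrite /i0 in hi; lia.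
  rewrite [LHS]mulrC big_distrr /=; apply: eq_bigr => k _; ring.
rewrite /gamma.
under eq_bigr => k _ do rewrite mulrAC mulrBl.
rewrite -mulr_suml sumrB (@sum_delta R l.+1 S.+1 (fun k => M l k p)); last by lia.
by rewrite -HS HM addrK mulfK ?Tll_neq0.
Qed.
End Tri.
Section Final.
Variable R : realType.

Lemma derivn_lin (q : {poly R}) (xi h : R) m :
  (q \Po (xi%:P + h *: 'X))^`(m) = h ^+ m *: (q^`(m) \Po (xi%:P + h *: 'X)).
Proof.
elim: m => [|m IH]; first by rewrite scale1r.
rewrite derivnS IH derivZ deriv_comp derivD derivC derivZ derivX add0r -derivnS.
by rewrite -scalerAr mulr1 scalerA exprSr.
Qed.

Theorem main (l : nat) (hl : (1 <= l)%N) :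
  exists sigma : nat -> nat -> R,
    forall (s : nat), (s <= l)%N ->
    forall (xi h : R) (a : 'I_l.+1 -> R) (q : {poly R}),
      h != 0 ->
      (size q <= l.+1)%N ->
      (forall i : 'I_l.+1, q.[xi + i%:R * h] = a i) ->
      (q^`(l - s)).[xi] =
        h ^- (l - s) *
        \sum_(k < s.+1)
          sigma s k *
          (\sum_(j < l.+1) (-1) ^+ j * ('C(l, j))%:R * (j%:R) ^+ k * a j).
Proof.
have [beta Hb] := @tri R l l (leqnn l).
exists (fun s k => ((l - s)`!)%:R * beta s k) => s hs xi h a q hh hq ha.
set m := (l - s)%N.
set r := xi%:P + h *: 'X.
set p := q \Po r.
have hr : (size r <= 2)%N.
  apply: leq_trans (size_polyD _ _) _; rewrite geq_max size_polyC.
  by rewrite (leq_trans (size_scale_leq _ _)) ?size_polyX //; case: (xi != 0).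
have hp : (size p <= l.+1)%N.
  apply: leq_trans (size_comp_poly_leq _ _) _.
  have : ((size r).-1 <= 1)%N by case: (size r) hr => [|[|[|]]].
  move: hq; case: (size q) => [|n] //= hn h1.
  by rewrite ltnS (leq_trans (leq_mul (leqnn n) h1)) // muln1.
have hpa : forall j : 'I_l.+1, p.[j%:R] = a j.
  move=> j; rewrite /p horner_comp -ha /r hornerD hornerC hornerZ hornerX.
  by rewrite mulrC.
have hd : (q^`(m)).[xi] = h ^- m * (p`_m * (m`!)%:R).
  rewrite -[p`_m * _](_ : (p^`(m)).[0] = _); last first.
    by rewrite horner_coef0 coef_derivn addn0 ffactnn mulr_natr.
  rewrite /p derivn_lin hornerZ horner_comp /r hornerD hornerC hornerZ hornerX mulr0 addr0.
  by rewrite mulrA mulVf ?mul1r // expf_neq0.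
rewrite hd; congr (_ * _).
rewrite ((proj2 (Hb s hs)) p hp) mulr_suml.
transitivity (\sum_(k < s.+1) beta s k * M l k p * (m`!)%:R); last first.
  apply: eq_bigr => k _; rewrite /M.
  under [in RHS]eq_bigr => j _ do rewrite -hpa.
  ring.
rewrite (@big_ord_widen _ _ _ s.+1 l.+1 (fun k => beta s k * M l k p * (m`!)%:R)); last by rewrite ltnS.
rewrite [LHS](bigID (fun k : 'I_l.+1 => (k < s.+1)%N)) /= [X in _ + X]big1 ?addr0 //.
by move=> k; rewrite -leqNgt => hk; rewrite (proj1 (Hb s hs)) // !mul0r.
Qed.
End Final.

Local Open Scope ring_scope.

Theorem proposition2 (R : realType) (l : nat) (hl : (1 <= l)%N) :
  exists sigma : nat -> nat -> R,
    forall (s : nat), (s <= l)%N ->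
    forall (xi h : R) (a : 'I_l.+1 -> R) (q : {poly R}),
      h != 0 ->
      (size q <= l.+1)%N ->
      (forall i : 'I_l.+1, q.[xi + i%:R * h] = a i) ->
      (q^`(l - s)).[xi] =
        h ^- (l - s) *
        \sum_(k < s.+1)
          sigma s k *
          (\sum_(j < l.+1) (-1) ^+ j * ('C(l, j))%:R * (j%:R) ^+ k * a j).
Proof. exact: (@main R l hl). Qed.
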